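(* Let $k \geq p \geq 1$ be integers, and let $x_1, \dots, x_k, y_1, \dots, y_k$ be non-negative real numbers such that $\prod_{i \in I} x_i \leq \prod_{i \in I} y_i$ for every subset $I$ of $\{1,\dots,k\}$ with $|I| = p$. Then $\prod_{i=1}^k x_i \leq \prod_{i=1}^k y_i$. *)

(* Defs.v *)
From mathcomp Require Import all_boot all_order all_algebra.
From mathcomp Require Import reals.

(* Main.v *)
Require Import Defs.
From mathcomp Require Import all_boot all_order all_algebra.
From mathcomp Require Import reals.
From mathcomp Require Import all_fingroup.
Import Order.TTheory GRing.Theory Num.Theory.
Local Open Scope ring_scope.

Section Aux.
Variable (k p : nat).
Let S := [set I : {set 'I_k} | #|I| == p].
Let Si (i : 'I_k) := [set I in S | i \in I].

Lemma cnt_le (i j : 'I_k) : (#|Si i| <= #|Si j|)%N.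
Proof.
set f := fun I : {set 'I_k} => [set tperm i j x | x in I].
have finj : injective f by apply: imset_inj; apply: perm_inj.
rewrite -(card_imset _ finj); apply: subset_leq_card; apply/subsetP => J.
case/imsetP => I; rewrite !inE => /andP[/eqP cI iI] ->.
rewrite /f card_imset; last exact: perm_inj.
rewrite cI eqxx /=; apply/imsetP; exists i => //; by rewrite tpermL.
Qed.

Lemma cnt_eq (i j : 'I_k) : #|Si i| = #|Si j|.
Proof. by apply/eqP; rewrite eqn_leq !cnt_le. Qed.

Lemma cnt_pos (i : 'I_k) : (1 <= p)%N -> (p <= k)%N -> (0 < #|Si i|)%N.
Proof.
move=> p1 pk.
set A0 := [set widen_ord pk j | j : 'I_p].
have cA : #|A0| = p by rewrite card_imset ?card_ord //; by move=> a b /(congr1 val) /= /val_inj.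
have : (0 < #|A0|)%N by rewrite cA.
case/card_gt0P => i0 i0A.
rewrite (cnt_eq i i0); apply/card_gt0P; exists A0.
by rewrite !inE cA eqxx.
Qed.

Lemma prod_swap (R : comPzSemiRingType) (x : 'I_k -> R) (i0 : 'I_k) :
  \prod_(I in S) \prod_(i in I) x i = (\prod_(i < k) x i) ^+ #|Si i0|.
Proof.
rewrite (exchange_big_dep predT) //= -prodrXl; apply: eq_bigr => i _.
rewrite (cnt_eq i0 i) -prodr_const; apply: eq_bigl => I.
by rewrite !inE.
Qed.
End Aux.

Theorem lemma5p2 (R : realType) (k p : nat) (x y : 'I_k -> R) :
  (1 <= p)%N -> (p <= k)%N ->
  (forall i, 0 <= x i) -> (forall i, 0 <= y i) ->
  (forall I : {set 'I_k}, #|I| = p ->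
     \prod_(i in I) x i <= \prod_(i in I) y i) ->
  \prod_(i < k) x i <= \prod_(i < k) y i.
Proof.
move=> p1 pk x0 y0 H.
have k0 : (0 < k)%N by apply: leq_trans pk.
pose i0 : 'I_k := Ordinal k0.
have cp := @cnt_pos k p i0 p1 pk.
rewrite -(ler_pXn2r cp) ?nnegrE; last (by apply: prodr_ge0 => *; apply: y0); last (by apply: prodr_ge0 => *; apply: x0).
rewrite -(@prod_swap k p _ x i0) -(@prod_swap k p _ y i0).
apply: ler_prod => I; rewrite inE => /eqP cI.
rewrite (H I cI) andbT; apply: prodr_ge0 => *; apply: x0.
Qed.
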